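(* For every integer $n\ge 2$, the Mutt polynomial \[ M(x)=\frac{(2n-1)T_{2n+1}(\sqrt{x})+(2n+1)T_{2n-1}(\sqrt{x})}{x\sqrt{x}} \] is a polynomial in $x$ of degree $n-1$ with leading coefficient $(2n-1)2^{2n}$, and \[ \operatorname{Disc}_x M(x)=\pm\,3\,(2n-1)^{n-3}(2n+1)^{n-2}\,n^{n-3}\,2^{2n^2-n-5}. \]
   Context: $T_m$ is the Chebyshev polynomial of the first kind, $T_m(\cos\theta)=\cos m\theta$. The discriminant of a polynomial of degree $d$ with leading coefficient $\gamma$ and roots $r_1,\dots,r_d$ is $\gamma^{2d-2}\prod_{i<j}(r_i-r_j)^2$ (equal to $1$ when $d=1$). *)

(* Defs.v *)
From HB Require Import structures.
From mathcomp Require Import all_boot all_order all_algebra all_field.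
Set Implicit Arguments. Unset Strict Implicit. Unset Printing Implicit Defensive.
Import Order.TTheory GRing.Theory Num.Theory.
Local Open Scope ring_scope.

Fixpoint cheb_pair (R : nzRingType) (m : nat) : {poly R} * {poly R} :=
  match m with
  | 0%N => (1, 'X)
  | m'.+1 => let (a, b) := cheb_pair R m' in (b, 'X *+ 2 * b - a)
  end.
Definition chebT (R : nzRingType) (m : nat) : {poly R} := (cheb_pair R m).1.

(* Discriminant over an algebraically closed field, following the definition
   gamma^(2d-2) * prod_{i<j} (r_i - r_j)^2 where p = gamma * prod (X - r_i). *)
Definition poly_roots (F : closedFieldType) (p : {poly F}) : seq F :=
  sval (closed_field_poly_normal p).

Definition disc (F : closedFieldType) (p : {poly F}) : F :=
  let r := poly_roots p in
  let d := (size p).-1 in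
  lead_coef p ^+ (2 * d - 2) *
  \prod_(i < size r) \prod_(j < size r | (i < j)%N) (r`_i - r`_j) ^+ 2.

(* Main.v *)
Require Import Defs.
From HB Require Import structures.
From mathcomp Require Import all_boot all_order all_algebra all_field.
From mathcomp Require Import ring zify.
Import Order.TTheory GRing.Theory Num.Theory.
Local Open Scope ring_scope.

Section Gen.
Variable F : closedFieldType.

Lemma prod_seq_ord (r : seq F) (G : F -> F) :
  \prod_(y <- r) G y = \prod_(i < size r) G r`_i.
Proof. by rewrite (big_nth 0) big_mkord. Qed.

Lemma roots_spec (p : {poly F}) : p != 0 ->
  p = lead_coef p *: \prod_(z <- poly_roots p) ('X - z%:P) /\
  size (poly_roots p) = (size p).-1.
Proof.
move=> p0; rewrite /poly_roots; case: (closed_field_poly_normal p) => r Dp /=.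
split=> //; rewrite [in RHS]Dp size_scale ?lead_coef_eq0 // size_prod_XsubC //.
Qed.

Lemma horner_fact (p : {poly F}) (a : F) (r : seq F) x :
  p = a *: \prod_(z <- r) ('X - z%:P) -> p.[x] = a * \prod_(z <- r) (x - z).
Proof.
move=> ->; rewrite hornerZ horner_prod; congr (_ * _).
by apply: eq_bigr => z _; rewrite hornerXsubC.
Qed.

Lemma deriv_fact (p : {poly F}) (a : F) (r : seq F) (i : 'I_(size r)) :
  p = a *: \prod_(z <- r) ('X - z%:P) ->
  p^`().[r`_i] = a * \prod_(j < size r | j != i) (r`_i - r`_j).
Proof.
move=> ->; rewrite (big_nth 0) big_mkord (bigD1 i) //=.
rewrite derivZ derivM derivXsubC mul1r hornerZ hornerD hornerM.
rewrite hornerXsubC subrr mul0r addr0 horner_prod; congr (_ * _).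
by apply: eq_bigr => j _; rewrite hornerXsubC.
Qed.

Lemma prod_pairs (r : seq F) :
  (\prod_(i < size r) \prod_(j < size r | (i < j)%N) (r`_i - r`_j) ^+ 2) ^+ 2 =
  (\prod_(i < size r) \prod_(j < size r | j != i) (r`_i - r`_j)) ^+ 2.
Proof.
symmetry; rewrite -prodrXl; under eq_bigr => i _ do rewrite -prodrXl.
have E : forall i : 'I_(size r),
  \prod_(j < size r | j != i) (r`_i - r`_j) ^+ 2 =
  \prod_(j < size r | (i < j)%N) (r`_i - r`_j) ^+ 2 *
  \prod_(j < size r | (j < i)%N) (r`_i - r`_j) ^+ 2.
  move=> i; rewrite (bigID (fun j : 'I_(size r) => (i < j)%N)) /=.
  congr (_ * _); apply: eq_bigl => j; rewrite -(inj_eq val_inj) /=;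
    by case: (ltngtP i j).
rewrite (eq_bigr _ (fun i _ => E i)) big_split /= expr2; congr (_ * _).
rewrite (exchange_big_dep predT) //=; apply: eq_bigr => j _.
by apply: eq_bigr => i _; rewrite -opprB sqrrN.
Qed.

Lemma sq_swap (r s : seq F) :
  (\prod_(x <- r) \prod_(y <- s) (x - y)) ^+ 2 =
  (\prod_(y <- s) \prod_(x <- r) (y - x)) ^+ 2.
Proof.
rewrite -!prodrXl; under eq_bigr do rewrite -prodrXl.
under [RHS]eq_bigr do rewrite -prodrXl.
rewrite exchange_big; apply: eq_bigr => y _; apply: eq_bigr => x _.
by rewrite -opprB sqrrN.
Qed.

End Gen.
Arguments roots_spec {F p}.
Arguments horner_fact {F p a r} x.
Arguments deriv_fact {F p a r} i.
Arguments prod_pairs {F}.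
Arguments sq_swap {F}.
Arguments prod_seq_ord {F}.

Notation T m := (chebT algC m).

Fixpoint chebU_pair (m : nat) : {poly algC} * {poly algC} :=
  match m with
  | 0%N => (0, 1)
  | m'.+1 => let (a, b) := chebU_pair m' in (b, 'X *+ 2 * b - a)
  end.
Definition U m := (chebU_pair m).1.

Lemma T0 : T 0 = 1. Proof. by []. Qed.
Lemma T1 : T 1 = 'X. Proof. by []. Qed.
Lemma U0 : U 0 = 0. Proof. by []. Qed.
Lemma U1 : U 1 = 1. Proof. by []. Qed.
Lemma TS2 m : T m.+2 = 'X *+ 2 * T m.+1 - T m.
Proof. by rewrite /chebT /=; case: (cheb_pair _ m). Qed.
Lemma US2 m : U m.+2 = 'X *+ 2 * U m.+1 - U m.
Proof. by rewrite /U /=; case: (chebU_pair m). Qed.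

Lemma first_order m :
  T m.+1 = 'X * T m + ('X^2 - 1) * U m /\ U m.+1 = T m + 'X * U m.
Proof.
elim: m => [|m [IT IU]]; first by rewrite T0 T1 U0 U1; split; ring.
rewrite TS2 US2 IT IU; split; ring.
Qed.

Lemma TS m : T m.+1 = 'X * T m + ('X^2 - 1) * U m.
Proof. by case: (first_order m). Qed.
Lemma US m : U m.+1 = T m + 'X * U m.
Proof. by case: (first_order m). Qed.

Lemma Tinv m : T m = 'X * T m.+1 - ('X^2 - 1) * U m.+1.
Proof. rewrite TS US; ring. Qed.

Lemma pell m : T m ^+ 2 - ('X^2 - 1) * U m ^+ 2 = 1.
Proof.
elim: m => [|m IH]; first by rewrite T0 U0; ring.
rewrite TS US -[RHS]IH; ring.
Qed.

Lemma derivT m : (T m)^`() = U m * m%:R.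
Proof.
suff: (T m)^`() = U m * m%:R /\ (T m.+1)^`() = U m.+1 * m.+1%:R by case.
elim: m => [|m [I1 I2]]; first by rewrite T0 T1 U0 U1 derivC derivX mul0r mul1r.
split=> //; rewrite TS2 derivB derivM derivMn derivX I1 I2.
have -> : T m.+1 = U m.+2 - 'X * U m.+1 by rewrite US; ring.
rewrite US2 -!natr1; set k : {poly algC} := m%:R.
clearbody k; move: (U m) (U m.+1) k => a b c; ring.
Qed.

Lemma two_neq0 : (2%:R : algC) != 0.
Proof. by rewrite pnatr_eq0. Qed.

Lemma step_sl (p q : {poly algC}) k l :
  size p = k.+1 -> lead_coef p = l -> (size q <= k.+1)%N ->
  size ('X *+ 2 * p - q) = k.+2 /\ lead_coef ('X *+ 2 * p - q) = 2%:R * l.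
Proof.
move=> sp lp sq.
have p0 : p != 0 by rewrite -size_poly_eq0 sp.
have E : 'X *+ 2 * p = 2%:R *: (p * 'X) by rewrite scaler_nat mulrnAl mulrC.
have sA : size ('X *+ 2 * p) = k.+2 by rewrite E size_scale ?two_neq0 // size_mulX // sp.
have lt : (size (- q) < size ('X *+ 2 * p)%R)%N by rewrite size_opp sA ltnS.
split; first by rewrite size_polyDl // sA.
by rewrite lead_coefDl // E lead_coefZ lead_coefMX lp.
Qed.

Lemma sizes m :
  [/\ size (T m.+1) = m.+2, lead_coef (T m.+1) = 2%:R ^+ m,
      size (U m.+1) = m.+1 & lead_coef (U m.+1) = 2%:R ^+ m].
Proof.
suff H : forall m, [/\ size (T m.+1) = m.+2, lead_coef (T m.+1) = 2%:R ^+ m,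
      size (U m.+1) = m.+1 & lead_coef (U m.+1) = 2%:R ^+ m] /\ [/\
      size (T m.+2) = m.+3, lead_coef (T m.+2) = 2%:R ^+ m.+1,
      size (U m.+2) = m.+2 & lead_coef (U m.+2) = 2%:R ^+ m.+1] by case: (H m) => -[].
move=> {m}; elim=> [|m [[s1 l1 s2 l2] [s3 l3 s4 l4]]].
  have [a b] := @step_sl 'X 1 1 1 (size_polyX _) (lead_coefX _) (ltac:(by rewrite size_poly1)).
  have [c d] := @step_sl 1 0 0 1 (size_poly1 _) (lead_coef1 _) (ltac:(by rewrite size_poly0)).
  by rewrite TS2 US2 T1 T0 U1 U0 size_polyX lead_coefX size_poly1 lead_coef1 a b c d
    mulr1 expr1 expr0.
have [a b] := @step_sl _ _ _ _ s3 l3 (leq_trans (eq_leq s1) (leqnSn _)).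
have [c d] := @step_sl _ _ _ _ s4 l4 (leq_trans (eq_leq s2) (leqnSn _)).
split; first by split.
by split; [rewrite TS2 a | rewrite TS2 b -exprS | rewrite US2 c | rewrite US2 d -exprS].
Qed.

Lemma comp1 (q : {poly algC}) : 1 \Po q = 1.
Proof. by rewrite -polyC1 comp_polyC. Qed.
Lemma compN1 (q : {poly algC}) : (-1) \Po q = -1.
Proof. by rewrite -polyC1 -polyCN comp_polyC. Qed.

Ltac compE := rewrite ?(comp_polyB, comp_polyD, comp_polyM, comp_polyX, comp1, compN1, comp_poly0).

Lemma parity k : exists W V A B : {poly algC},
  [/\ T (2 * k) = W \Po 'X^2, U (2 * k) = 'X * (V \Po 'X^2),
      T (2 * k).+1 = 'X * (A \Po 'X^2) & U (2 * k).+1 = B \Po 'X^2].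
Proof.
elim: k => [|k [W [V [A [B [h1 h2 h3 h4]]]]]].
  exists 1, 0, 1, 1; rewrite muln0 T0 U0 T1 U1; compE; split; ring.
have -> : (2 * k.+1 = (2 * k).+2)%N by lia.
pose A' := W + ('X - 1) * V; pose B' := W + 'X * V.
pose W' := 'X * A' + ('X - 1) * B'; pose V' := A' + B'.
exists W', V', (W' + ('X - 1) * V'), (W' + 'X * V').
rewrite /W' /V' /A' /B'.
do 4 rewrite ?TS ?US. rewrite h1 h2; compE.
move: (W \Po 'X^2) (V \Po 'X^2) => w v; split; ring.
Qed.

Lemma cancelX2 (p q : {poly algC}) j :
  (p \Po 'X^2) * 'X^j = (q \Po 'X^2) * 'X^j -> p = q.
Proof.
move=> /mulIf H; apply/eqP; rewrite -subr_eq0 -(comp_poly_eq0 _ (q := 'X^2)).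
  by rewrite comp_polyB H ?subrr // monic_neq0 // monicXn.
by rewrite size_polyXn.
Qed.

Lemma lin1 (gl gr hl hr c : {poly algC}) : hl = hr -> gl - gr = c * (hl - hr) -> gl = gr.
Proof. by move=> -> /eqP; rewrite subrr mulr0 subr_eq0 => /eqP. Qed.

Lemma f_ident m :
  m%:R *: T m.+2 + m.+2%:R *: T m =
    (2 * m.+1)%:R *: ('X * T m.+1) - 2%:R *: (('X^2 - 1) * U m.+1)
 /\ (m%:R *: T m.+2 + m.+2%:R *: T m)^`() = (2 * m * m.+2)%:R *: ('X * U m.+1).
Proof.
split.
  rewrite (TS m.+1) (Tinv m) -!mul_polyC !polyC_natr.
  move: (T m.+1) (U m.+1) => t u; rewrite !natrM -!natr1; ring.
rewrite derivD !derivZ !derivT US2 -!mul_polyC !polyC_natr.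
move: (U m.+1) (U m) => t u; rewrite !natrM -!natr1; ring.
Qed.

Lemma size_compX2 (p : {poly algC}) : p != 0 ->
  size (p \Po 'X^2) = ((size p).-1 * 2).+1 /\ lead_coef (p \Po 'X^2) = lead_coef p.
Proof.
move=> p0; have s2 : (1 < size ('X^2 : {poly algC}))%N by rewrite size_polyXn.
split; last by rewrite lead_coef_comp // lead_coefXn expr1n mulr1.
have := size_comp_poly p 'X^2; rewrite size_polyXn /= => <-.
by rewrite prednK // lt0n size_poly_eq0 comp_poly_eq0.
Qed.

Lemma M_size_lead k (M : {poly algC}) : let m := (2 * k).+1 in
  (M \Po 'X^2) * 'X^3 = m%:R *: T m.+2 + m.+2%:R *: T m ->
  size M = k.+1 /\ lead_coef M = m%:R * 2%:R ^+ m.+1.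
Proof.
move=> m H.
have [s1 l1 _ _] := sizes m.+1.
have [s0 _ _ _] := sizes (2 * k).
have m0 : (m%:R : algC) != 0 by rewrite pnatr_eq0.
have lt : (size (m.+2%:R *: T m) < size (m%:R *: T m.+2))%N.
  by rewrite !size_scale ?pnatr_eq0 // s0 s1.
have sf : size (m%:R *: T m.+2 + m.+2%:R *: T m) = m.+3 by rewrite size_polyDl // size_scale.
have lf : lead_coef (m%:R *: T m.+2 + m.+2%:R *: T m) = m%:R * 2%:R ^+ m.+1.
  by rewrite lead_coefDl // lead_coefZ l1.
have M0 : M != 0.
  apply/eqP => M0; move: sf; rewrite -H M0 comp_poly0 mul0r size_poly0 //.
have [sc lc] := @size_compX2 M M0.
have Mc0 : M \Po 'X^2 != 0 by rewrite -size_poly_eq0 sc.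
split; last by rewrite -lc -lf -H lead_coefM lead_coefXn mulr1.
move: sf; rewrite -H size_mulXn // sc /m => /eqP.
rewrite -(prednK (n := size M)) ?lt0n ?size_poly_eq0 //.
move=> /eqP h; congr _.+1; lia.
Qed.

Ltac compE2 := rewrite ?(comp_polyB, comp_polyD, comp_polyZ, comp_polyM, comp_polyX, comp1, comp_poly0).

Lemma y_ident k (M : {poly algC}) : let m := (2 * k).+1 in
  (M \Po 'X^2) * 'X^3 = m%:R *: T m.+2 + m.+2%:R *: T m ->
  exists W V : {poly algC}, [/\ size V = k.+1, lead_coef V = 2%:R ^+ m,
     3%:R *: M + 2%:R *: ('X * M^`()) = (2 * m * m.+2)%:R *: V,
     'X * M = (2 * m.+1)%:R *: W + 2%:R *: ((1 - 'X) * V)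
   & W ^+ 2 - ('X - 1) * 'X * V ^+ 2 = 1].
Proof.
move=> m H.
have [W [V [A [B [hT hU _ _]]]]] := parity k.+1.
have e : (2 * k.+1 = m.+1)%N by rewrite /m; lia.
rewrite e in hT hU.
have [s2 l2 s3 l3] := sizes m.
have [fE dE] := f_ident m.
have V0 : V != 0.
  apply/eqP => V0; move: s3; rewrite hU V0 comp_poly0 mulr0 size_poly0 //.
have [sc lc] := @size_compX2 V V0.
exists W, V; split.
- move: s3; rewrite hU mulrC size_mulX ?sc; last by rewrite -size_poly_eq0 sc.
  move=> [] h; rewrite -(prednK (n := size V)) ?lt0n ?size_poly_eq0 //.
  have hh : (size V).-1 = k by move: h; set z := (size V).-1; lia.
  by rewrite hh.
- by rewrite -lc -l3 hU mulrC lead_coefMX.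
- apply: (@cancelX2 _ _ 2); compE2.
  have Hd := congr1 (fun p => p^`()) H; rewrite /= dE derivM deriv_comp !derivXn in Hd.
  rewrite hU in Hd; move: Hd.
  move: (M \Po 'X^2) (M^`() \Po 'X^2) (V \Po 'X^2) => a b c Hd.
  apply: (@lin1 _ _ _ _ 1 Hd); rewrite -!mul_polyC !polyC_natr.
  move: ((2 * m * m.+2)%:R : {poly algC}) => z /=; ring.
- apply: (@cancelX2 _ _ 1); compE2.
  move: H; rewrite fE hT hU.
  move: (M \Po 'X^2) (W \Po 'X^2) (V \Po 'X^2) => a b c H.
  apply: (@lin1 _ _ _ _ 1 H); rewrite -!mul_polyC !polyC_natr.
  move: ((2 * m.+1)%:R : {poly algC}) => z /=; ring.
- apply: (@cancelX2 _ _ 0); rewrite !expr2; compE2.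
  have P := pell m.+1; rewrite hT hU in P; move: P.
  move: (W \Po 'X^2) (V \Po 'X^2) => a b P.
  apply: (@lin1 _ _ _ _ 1 P); ring.
Qed.

Lemma prodM_ord n (c : algC) (G : 'I_n -> algC) :
  \prod_(i < n) (c * G i) = c ^+ n * \prod_(i < n) G i.
Proof. by rewrite big_split /= prodr_const card_ord. Qed.

Lemma disc_main (M V W : {poly algC}) (d : nat) (a b : algC) :
  size M = d.+2 -> size V = d.+2 ->
  3%:R *: M + 2%:R *: ('X * M^`()) = a *: V ->
  'X * M = b *: W + 2%:R *: ((1 - 'X) * V) ->
  W ^+ 2 - ('X - 1) * 'X * V ^+ 2 = 1 ->
  (disc M * (lead_coef M * 2%:R ^+ d.+1 * M.[0] * V.[0])) ^+ 2 =
  (a ^+ d.+1 * lead_coef V ^+ d.+2 * b ^+ d.+1) ^+ 2.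
Proof.
move=> sM sV HA HB HC.
have M0 : M != 0 by rewrite -size_poly_eq0 sM.
have V0 : V != 0 by rewrite -size_poly_eq0 sV.
have [DM sr] := roots_spec M0; have [DV ss] := roots_spec V0.
rewrite /disc; set r := poly_roots M in DM sr *; set s := poly_roots V in DV ss.
set c := lead_coef M in DM *; set v := lead_coef V in DV *.
rewrite sM /= in sr; rewrite sV /= in ss; rewrite sM /=.
set Dp := \prod_(i < size r) _.
set Q := \prod_(i < size r) \prod_(j < size r | j != i) (r`_i - r`_j).
set P := \prod_(i < size r) r`_i.
set Sg := \prod_(k < size s) s`_k.
set PM' := \prod_(i < size r) M^`().[r`_i].
set PV := \prod_(i < size r) V.[r`_i].
set PMs := \prod_(k < size s) M.[s`_k].
set R1 := \prod_(i < size r) \prod_(k < size s) (r`_i - s`_k).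
set R2 := \prod_(k < size s) \prod_(i < size r) (s`_k - r`_i).
have E1 : Dp ^+ 2 = Q ^+ 2 by rewrite prod_pairs.
have E2 : PM' = c ^+ d.+1 * Q.
  rewrite /PM' -sr -prodM_ord; apply: eq_bigr => i _; exact: deriv_fact DM.
have rootM : forall x, x \in r -> M.[x] = 0.
  move=> x xr; rewrite (horner_fact x DM) (big_rem x xr) /= subrr mul0r mulr0 //.
have rootV : forall x, x \in s -> V.[x] = 0.
  move=> x xs; rewrite (horner_fact x DV) (big_rem x xs) /= subrr mul0r mulr0 //.
have E3 : 2%:R ^+ d.+1 * P * PM' = a ^+ d.+1 * PV.
  rewrite /P /PM' /PV -sr -prodM_ord -prodM_ord -big_split /=; apply: eq_bigr => i _.
  have := congr1 (fun p => p.[r`_i]) HA.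
  rewrite /= hornerD !hornerZ hornerM hornerX rootM ?mem_nth // mulr0 add0r => <-.
  by rewrite mulrA.
have E4a : PV = v ^+ d.+1 * R1.
  rewrite /PV /R1 -sr -prodM_ord; apply: eq_bigr => i _.
  by rewrite (horner_fact _ DV) prod_seq_ord ss.
have E4b : PMs = c ^+ d.+1 * R2.
  rewrite /PMs /R2 -ss -prodM_ord; apply: eq_bigr => i _.
  by rewrite (horner_fact _ DM) prod_seq_ord sr.
have E4c : R1 ^+ 2 = R2 ^+ 2.
  have := sq_swap r s; rewrite !prod_seq_ord.
  by under eq_bigr do rewrite prod_seq_ord; under [in RHS]eq_bigr do rewrite prod_seq_ord.
have E5 : (Sg * PMs) ^+ 2 = (b ^+ d.+1) ^+ 2.
  rewrite /Sg /PMs -big_split -prodrXl /=.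
  have cst : (b ^+ 2) ^+ size s = \prod_(k < size s) b ^+ 2 by rewrite prodr_const card_ord.
  rewrite -exprM mulnC exprM -ss cst.
  apply: eq_bigr => k _.
  have zs : s`_k \in s by rewrite mem_nth.
  have h1 := congr1 (fun p => p.[s`_k]) HB.
  have h2 := congr1 (fun p => p.[s`_k]) HC.
  rewrite /= -?polyC1 ?(hornerD, hornerN, hornerX, hornerC, horner_exp, hornerZ, hornerM) rootV // in h1 h2.
  move: h1 h2; move: (s`_k) (M.[s`_k]) (W.[s`_k]) => z m w h1 h2.
  rewrite h1; rewrite !(mulr0, expr0n, subr0, addr0) /= in h1 h2 *.
  by rewrite exprMn h2 mulr1.
have sq0 : forall (q : {poly algC}) (e : algC) (t : seq algC),
    q = e *: \prod_(z <- t) ('X - z%:P) ->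
    q.[0] ^+ 2 = e ^+ 2 * (\prod_(i < size t) t`_i) ^+ 2.
  move=> q e t Dq; rewrite (horner_fact 0 Dq) prod_seq_ord exprMn -!prodrXl.
  by congr (_ * _); apply: eq_bigr => i _; rewrite sub0r sqrrN.
have E6a := sq0 _ _ _ DM; have E6b := sq0 _ _ _ DV.
rewrite -/P in E6a; rewrite -/Sg in E6b.
have -> : (2 * d.+1 - 2 = 2 * d)%N by lia.
have eC : c ^+ (2 * d) * c ^+ 2 = (c ^+ d.+1) ^+ 2.
  by rewrite -!exprM -exprD; congr (_ ^+ _); lia.
rewrite [v ^+ d.+2]exprSr.
clearbody Dp Q P Sg PM' PV PMs R1 R2 c v.
move: (M.[0]) (V.[0]) E6a E6b => M0' V0' E6a E6b.
clear -E1 E2 E3 E4a E4b E4c E5 E6a E6b eC.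
move: E1 E2 E3 E4a E4b E4c E5 E6a E6b eC.
move: (c ^+ (2 * d)) (c ^+ d.+1) (2%:R ^+ d.+1 : algC) (a ^+ d.+1) (v ^+ d.+1) (b ^+ d.+1).
move: M0' V0' Dp Q P Sg PM' PV PMs R1 R2 c v.
move=> M0' V0' Dp' Q' P' Sg' PM'' PV' PMs' R1' R2' c' v' X C T2 A Vd B.
move=> E1 E2 E3 E4a E4b E4c E5 E6a E6b eC.
transitivity (X ^+ 2 * Dp' ^+ 2 * c' ^+ 2 * T2 ^+ 2 * M0' ^+ 2 * V0' ^+ 2); first ring.
rewrite E1 E6a E6b.
transitivity ((X * c' ^+ 2) ^+ 2 * (T2 * P' * Q') ^+ 2 * v' ^+ 2 * Sg' ^+ 2); first ring.
rewrite eC.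
transitivity ((T2 * P' * (C * Q')) ^+ 2 * C ^+ 2 * v' ^+ 2 * Sg' ^+ 2); first ring.
rewrite -E2 E3 E4a.
transitivity (A ^+ 2 * Vd ^+ 2 * v' ^+ 2 * R1' ^+ 2 * C ^+ 2 * Sg' ^+ 2); first ring.
rewrite E4c.
transitivity (A ^+ 2 * Vd ^+ 2 * v' ^+ 2 * (Sg' * (C * R2')) ^+ 2); first ring.
rewrite -E4b E5; ring.
Qed.

Lemma key_id j (x y z : algC) : x != 0 -> z != 0 ->
 12%:R * ((2%:R * x * y) ^+ j.+1 * (2%:R ^+ (2 * j.+1).+1) ^+ j.+2 * (4%:R * z) ^+ j.+1) =
 (3%:R * (x ^+ j * x^-1) * y ^+ j * (z ^+ j * z^-1) * 2%:R ^+ (2 * (j * j) + 7 * j + 1)) *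
 (x * 2%:R ^+ (2 * j.+1).+2 * 2%:R ^+ j.+1 * (2%:R * x * y * (4%:R * z) ^+ 2)).
Proof.
move=> x0 z0.
have f4 : (4%:R : algC) = 2%:R ^+ 2 by rewrite -natrX.
rewrite f4 -?exprM (exprS (2%:R * x * y)) (exprS (2%:R ^+ 2 * z)) !exprMn -?exprM.
have q1 : (2%:R : algC) ^+ ((2 * j.+1).+1 * j.+2) = (2%:R ^+ (j * j)) ^+ 2 * (2%:R ^+ j) ^+ 7 * 2%:R ^+ 6.
  by rewrite -!exprM -!exprD; congr (_ ^+ _); lia.
have q2 : (2%:R : algC) ^+ (2 * j) = (2%:R ^+ j) ^+ 2 by rewrite -exprM mulnC.
have q3 : (2%:R : algC) ^+ (2 * (j * j) + 7 * j + 1) = (2%:R ^+ (j * j)) ^+ 2 * (2%:R ^+ j) ^+ 7 * 2%:R ^+ 1.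
  by rewrite -!exprM -!exprD; congr (_ ^+ _); lia.
have q4 : (2%:R : algC) ^+ (2 * j.+1).+2 = (2%:R ^+ j) ^+ 2 * 2%:R ^+ 4.
  by rewrite -!exprM -!exprD; congr (_ ^+ _); lia.
have q5 : (2%:R : algC) ^+ j.+1 = 2%:R ^+ j * 2%:R by rewrite exprSr.
rewrite q1 ?q2 q3 q4 q5.
move: (2%:R ^+ (j * j) : algC) (2%:R ^+ j : algC) (x ^+ j) (y ^+ j) (z ^+ j) => w u X Y Z.
field.
by rewrite x0 z0.
Qed.

Lemma linC (c gl gr hl hr : algC) : hl = hr -> gl - gr = c * (hl - hr) -> gl = gr.
Proof. by move=> -> /eqP; rewrite subrr mulr0 subr_eq0 => /eqP. Qed.

Lemma exist_M k : let m := (2 * k).+1 in exists M : {poly algC},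
  (M \Po 'X^2) * 'X^3 = m%:R *: T m.+2 + m.+2%:R *: T m.
Proof.
move=> m.
have [W [V [A [B [hT hU _ _]]]]] := parity k.+1.
have e : (2 * k.+1 = m.+1)%N by rewrite /m; lia.
rewrite e in hT hU.
have [fE dE] := f_ident m.
pose G := (2 * m.+1)%:R *: W - 2%:R *: (('X - 1) * V).
have fG : m%:R *: T m.+2 + m.+2%:R *: T m = 'X * (G \Po 'X^2).
  rewrite fE hT hU /G !comp_polyB !comp_polyZ comp_polyM comp_polyB comp_polyX -polyC1 comp_polyC polyC1.
  rewrite -!mul_polyC !polyC_natr; move: (W \Po 'X^2) (V \Po 'X^2) ((2 * m.+1)%:R : {poly algC}) => w v z.
  ring.
have G0 : root G 0.
  have := congr1 (fun p => p^`().[0]) fG; rewrite /= dE derivM derivX mul1r deriv_comp.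
  rewrite hornerD hornerZ !hornerM hornerX !mul0r mulr0 addr0 horner_comp hornerXn expr0n /=.
  by rewrite /root => <-.
have [q Dq] := factor_theorem G 0 G0.
exists q; rewrite fG Dq comp_polyM comp_polyB comp_polyX comp_polyC subr0.
rewrite mulrC; move: (q \Po 'X^2) => p; ring.
Qed.
Theorem theorem3 (n : nat) (hn : (2 <= n)%N) :
  (exists M : {poly algC},
      (M \Po 'X^2) * 'X^3 =
      (2 * n - 1)%:R *: chebT algC (2 * n + 1) + (2 * n + 1)%:R *: chebT algC (2 * n - 1))
  /\
  (forall M : {poly algC},
      (M \Po 'X^2) * 'X^3 =
      (2 * n - 1)%:R *: chebT algC (2 * n + 1) + (2 * n + 1)%:R *: chebT algC (2 * n - 1) ->
      [/\ (size M).-1 = (n - 1)%N,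
          lead_coef M = ((2 * n - 1) * 2 ^ (2 * n))%:R
        & let c : algC := 3%:R * ((2 * n - 1)%:R : algC) ^ (n%:Z - 3) * ((2 * n + 1)%:R : algC) ^ (n%:Z - 2)
                            * (n%:R : algC) ^ (n%:Z - 3) * (2%:R : algC) ^ (2 * n%:Z ^+ 2 - n%:Z - 5) in
          disc M = c \/ disc M = - c]).
Proof.
have [j ->] : exists j, n = j.+2 by exists (n - 2)%N; lia.
have e3 : (2 * j.+2 = (2 * j.+1).+2)%N by lia.
rewrite e3 /= !subn1 /= !addn1.
set m := (2 * j.+1).+1.
split; first exact: exist_M.
move=> M H.
have [sM lM] := @M_size_lead j.+1 M H.
have [W [V [sV lV HA HB HC]]] := @y_ident j.+1 M H.
split.
- by rewrite sM.
- by rewrite lM natrM natrX.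
have D := @disc_main M V W j _ _ sM sV HA HB HC.
set x : algC := m%:R; set y : algC := m.+2%:R; set z : algC := (j.+2)%:R.
have ea : ((2 * (2*j.+1).+1 * (2*j.+1).+3)%:R : algC) = 2%:R * x * y by rewrite !natrM.
have eb : ((2 * (2*j.+1).+2)%:R : algC) = 4%:R * z by rewrite -natrM; congr _%:R; lia.
have h1 := congr1 (fun p => p.[0]) HA.
have h2 := congr1 (fun p => p.[0]) HB.
have h3 := congr1 (fun p => p.[0]) HC.
rewrite /= -?polyC1 ?(hornerD, hornerN, hornerX, hornerC, horner_exp, hornerZ, hornerM) in h1 h2 h3.
rewrite lM lV ea eb in D; rewrite ea eb in h1 h2.
move: D h1 h2 h3; move: (M.[0]) (V.[0]) (W.[0]) (M^`().[0]) => M0 V0 W0 M1 D h1 h2 h3.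
have MV : 12%:R * (M0 * V0) = 2%:R * x * y * (4%:R * z) ^+ 2.
  have e1 : 3%:R * M0 = 2%:R * x * y * V0 by rewrite -h1; ring.
  have e2 : 2%:R * V0 = - (4%:R * z * W0) by apply: (@linC (-1) (2%:R * V0) (- (4%:R * z * W0)) _ _ h2); ring.
  have e4 : W0 ^+ 2 = 1 by rewrite -h3; ring.
  transitivity (4%:R * V0 * (3%:R * M0)); first ring.
  rewrite e1; transitivity (2%:R * x * y * (2%:R * V0) ^+ 2); first ring.
  by rewrite e2 sqrrN exprMn e4 mulr1.
have x0 : x != 0 by rewrite pnatr_eq0.
have z0 : z != 0 by rewrite pnatr_eq0.
have i1 : ((j.+2)%:Z - 3 = j%:Z + (-1))%R by lia.
have i2 : ((j.+2)%:Z - 2 = j%:Z)%R by lia.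
have i3 : (2 * (j.+2)%:Z ^+ 2 - (j.+2)%:Z - 5 = (2 * (j * j) + 7 * j + 1)%N%:Z)%R.
  by rewrite expr2; lia.
rewrite i1 i2 i3 !expfzDr // !exprN1 -!exprnP.
set tgt := 3%:R * (x ^+ j * x^-1) * _ * _ * _.
have D2 : (disc M * (x * 2%:R ^+ (2 * j.+1).+2 * 2%:R ^+ j.+1 * (2%:R * x * y * (4%:R * z) ^+ 2))) ^+ 2
   = (12%:R * ((2%:R * x * y) ^+ j.+1 * (2%:R ^+ (2 * j.+1).+1) ^+ j.+2 * (4%:R * z) ^+ j.+1)) ^+ 2.
  rewrite -MV; rewrite exprMn [in RHS]exprMn -D -/m -/x; move: (disc M) (2%:R ^+ (2 * j.+1).+2 : algC) (2%:R ^+ j.+1 : algC) => dd p1 p2; ring.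
rewrite key_id // -/tgt in D2.
have L0 : (x * 2%:R ^+ (2 * j.+1).+2 * 2%:R ^+ j.+1 * (2%:R * x * y * (4%:R * z) ^+ 2)) ^+ 2 != 0.
  by rewrite !(expf_neq0, mulf_neq0) // pnatr_eq0.
have sq : disc M ^+ 2 = tgt ^+ 2.
  by move: D2; rewrite [LHS]exprMn [RHS]exprMn => /(mulIf L0).
move/eqP: sq; rewrite eqf_sqr => /orP [/eqP ->|/eqP ->]; [left|right] => //.
Qed.
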